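(* Let $a,b\in\mathbb{Q}_3$ with $\gamma(a)=0$, $\gamma(b)=m>0$ and $a_0=2$. Then $x=\sum_{k\ge0}x_k3^k\in\mathbb{Z}_3^*$ is a solution of $x^3+ax=b$ if and only if the congruences $$x_0^3+a_0x_0\equiv0\pmod 3,$$ $$x_1a_0+x_0a_1+N_1(x_0)+M_1(x_0)\equiv 0\pmod 3,$$ $$x_ka_0+\dots+x_0a_k+x_0^2x_{k-1}+N_k(x_0,\dots,x_{k-1})+M_k(x_0,\dots,x_{k-1})\equiv0\pmod 3,\quad 2\le k\le m-1,$$ $$x_ka_0+\dots+x_0a_k+x_0^2x_{k-1}+N_k(x_0,\dots,x_{k-1})+M_k(x_0,\dots,x_{k-1})\equiv b_{k-m}\pmod 3,\quad k\ge m,$$ are fulfilled, where the integers $M_k(x_0,\dots,x_{k-1})$ are defined successively by $$x_0^3+2x_0=3M_1(x_0),$$ $$x_1a_0+x_0a_1+N_1(x_0)=-M_1(x_0)+3M_2(x_0,x_1),$$ $$x_ka_0+x_{k-1}a_1+\dots+x_0a_k+x_0^2x_{k-1}+N_k(x_0,\dots,x_{k-1})=-M_k(x_0,\dots,x_{k-1})+3M_{k+1}(x_0,\dots,x_k),\quad 2\le k\le m-1,$$ $$x_ka_0+x_{k-1}a_1+\dots+x_0a_k+x_0^2x_{k-1}+N_k(x_0,\dots,x_{k-1})=b_{k-m}-M_k(x_0,\dots,x_{k-1})+3M_{k+1}(x_0,\dots,x_k),\quad k\ge m.$$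
   Context: Write $a=3^{\gamma(a)}(a_0+a_13+a_23^2+\dots)$, $b=3^{\gamma(b)}(b_0+b_13+b_23^2+\dots)$ in canonical form, with digits $a_j,b_j\in\{0,1,2\}$, $a_0,b_0\ne0$, $\gamma(a),\gamma(b)\in\mathbb{Z}$. $\mathbb{Z}_3^*$ is the set of $3$-adic units; $x\in\mathbb{Z}_3^*$ is written $x=x_0+x_13+x_23^2+\dots$ with $x_j\in\{0,1,2\}$, $x_0\ne0$. For $k\ge1$, $N_k(x_0,\dots,x_{k-1})=\sum \frac{3!}{m_0!\cdots m_{k-1}!}x_0^{m_0}\cdots x_{k-1}^{m_{k-1}}$, the sum over nonnegative integers $m_0,\dots,m_{k-1}$ with $\sum_{i=0}^{k-1}m_i=3$ and $\sum_{i=1}^{k-1}im_i=k$; in particular $N_1=0$. *)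

(* Defs.v *)
(* 3-adic integers are represented by their digit sequences. *)
From mathcomp Require Import all_boot all_order all_algebra.
Set Implicit Arguments. Unset Strict Implicit. Unset Printing Implicit Defensive.
Import Order.TTheory GRing.Theory Num.Theory.
Local Open Scope ring_scope.

Definition digits3 (s : nat -> nat) : Prop := forall j, (s j < 3)%N.

Definition trunc3 (s : nat -> nat) (n : nat) : int :=
  \sum_(k < n) (s k)%:Z * (3%:Z) ^+ k.

(* The 3-adic integer with digits x solves x^3 + a x = b, where a is the unit
   with digits a (gamma(a)=0) and b = 3^m (b_0 + b_1 3 + ...).
   Equality in Z_3 is equality modulo 3^n for every n (Z_3 = lim Z/3^n). *)
Definition is_solution3 (a b : nat -> nat) (m : nat) (x : nat -> nat) : Prop :=
  forall n : nat,
    (3%:Z ^+ n %| trunc3 x n ^+ 3 + trunc3 a n * trunc3 x n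
                  - 3%:Z ^+ m * trunc3 b n)%Z.

(* N_k(x_0,...,x_{k-1}) : multinomial sum over (m_0..m_{k-1}) with
   sum m_i = 3 and sum i m_i = k (each m_i <= 3, so m_i : 'I_4). *)
Definition Nk (x : nat -> nat) (k : nat) : int :=
  \sum_(mm : {ffun 'I_k -> 'I_4} |
          ((\sum_(i < k) (mm i : nat))%N == 3%N)
          && ((\sum_(i < k) (i : nat) * (mm i : nat))%N == k))
     ((3`! %/ \prod_(i < k) (mm i : nat)`!)%N%:Z
       * \prod_(i < k) ((x i)%:Z ^+ (mm i : nat))).

Definition conv3 (a x : nat -> nat) (k : nat) : int :=
  \sum_(i < k.+1) (a i)%:Z * (x (k - i)%N)%:Z.

(* left-hand side (without M_k) of the k-th congruence *)
Definition Lk (a x : nat -> nat) (k : nat) : int :=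
  match k with
  | 0 => (x 0%N)%:Z ^+ 3 + conv3 a x 0
  | k'.+1 => conv3 a x k + (if (2 <= k)%N then (x 0%N)%:Z ^+ 2 * (x k')%:Z else 0)
             + Nk x k
  end.

Definition ck (b : nat -> nat) (m k : nat) : int :=
  if (k < m)%N then 0 else (b (k - m)%N)%:Z.

Fixpoint Mk (a b x : nat -> nat) (m k : nat) : int :=
  match k with
  | 0 => 0
  | k'.+1 => ((Lk a x k' + Mk a b x m k' - ck b m k') %/ 3)%Z
  end.

(* Main.v *)
Require Import Defs.
From mathcomp Require Import all_boot all_order all_algebra.
Set Implicit Arguments. Unset Strict Implicit. Unset Printing Implicit Defensive.
Import Order.TTheory GRing.Theory Num.Theory.
Local Open Scope ring_scope.

Definition extf k (T : finType) (g : {ffun 'I_k -> T}) (j : T) : {ffun 'I_k.+1 -> T} :=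
  [ffun i => if unlift ord_max i is Some i' then g i' else j].

Lemma extf_max k (T : finType) (g : {ffun 'I_k -> T}) j : extf g j ord_max = j.
Proof. by rewrite /extf ffunE unlift_none. Qed.

Lemma extf_widen k (T : finType) (g : {ffun 'I_k -> T}) j (i : 'I_k) h :
  extf g j (widen_ord h i) = g i.
Proof.
have -> : widen_ord h i = lift ord_max i by apply/val_inj; exact: (esym (lift_max i)).
by rewrite /extf ffunE liftK.
Qed.

Lemma split_ffun (R : nmodType) k (T : finType) (F : {ffun 'I_k.+1 -> T} -> R) :
  \sum_(mm : {ffun 'I_k.+1 -> T}) F mm =
  \sum_(j : T) \sum_(g : {ffun 'I_k -> T}) F (extf g j).
Proof.
rewrite pair_big /=.
rewrite (reindex (fun p : T * {ffun 'I_k -> T} => extf p.2 p.1)) //=.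
exists (fun mm : {ffun 'I_k.+1 -> T} => (mm ord_max, [ffun i => mm (widen_ord (leqnSn k) i)])).
  move=> [j g] _ /=; rewrite extf_max; congr pair; apply/ffunP => i.
  by rewrite ffunE extf_widen.
move=> mm _ /=; apply/ffunP => i; rewrite /extf ffunE.
case: unliftP => [i' ->|->]; last by [].
rewrite ffunE; congr (mm _); apply/val_inj => /=; by rewrite /bump leqNgt ltn_ord.
Qed.

Lemma fact_prod_dvd k (g : 'I_k -> nat) :
  (\prod_(i < k) (g i)`! %| (\sum_(i < k) g i)`!)%N.
Proof.
elim: k g => [|k IH] g; first by rewrite !big_ord0.
rewrite !big_ord_recr /=.
set S := (\sum_(i < k) _)%N; set P := (\prod_(i < k) _)%N.
rewrite -(bin_fact (leq_addl S (g ord_max))) addnK.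
apply: dvdn_mull; rewrite [X in (_ %| X)%N]mulnC; apply: dvdn_mul => //.
exact: (IH (fun i => g (widen_ord (leqnSn k) i))).
Qed.

Lemma bigext (R : Type) (idx : R) (op : Monoid.com_law idx) k (g : {ffun 'I_k -> 'I_4}) (j : 'I_4) (F : nat -> nat -> R) :
  \big[op/idx]_(i < k.+1) F i (extf g j i) = op (\big[op/idx]_(i < k) F i (g i)) (F k j).
Proof.
rewrite big_ord_recr /= extf_max; congr (op _ _).
by apply: eq_bigr => i _; rewrite extf_widen.
Qed.

From mathcomp Require Import zify ring.

Definition pk (y : nat -> int) k : {poly int} := \poly_(i < k) y i.

Lemma pkS y k : pk y k.+1 = pk y k + y k *: 'X^k.
Proof. by rewrite /pk !poly_def big_ord_recr. Qed.

Lemma pk0 y : pk y 0 = 0.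
Proof. by rewrite /pk poly_def big_ord0. Qed.

Lemma multi_div s j q P : (j <= s)%N -> (s - j)`! = (q * P)%N ->
  (s`! %/ (P * j`!) = 'C(s, j) * q)%N.
Proof.
move=> hj hq; rewrite -(bin_fact hj) hq.
have hP : (0 < P)%N.
  by case: P hq => // ; rewrite muln0 => /eqP; rewrite eqn0Ngt fact_gt0.
rewrite [X in (X %/ _)%N](_ : _ = 'C(s,j) * q * (P * j`!))%N; last by ring.
by rewrite mulnK // muln_gt0 fact_gt0 hP.
Qed.

Definition Fm (y : nat -> int) k s (mm : {ffun 'I_k -> 'I_4}) : {poly int} :=
  (((s`! %/ \prod_(i<k) (mm i : nat)`!)%N%:Z * \prod_(i<k) y i ^+ (mm i : nat))
     *: 'X^(\sum_(i<k) i * mm i)%N).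

Lemma multinom y k s : (s <= 3)%N ->
  pk y k ^+ s = \sum_(mm : {ffun 'I_k -> 'I_4} | (\sum_(i<k) (mm i : nat))%N == s)
     Fm y s mm.
Proof.
elim: k s => [|k IH] s hs.
  rewrite pk0 big_mkcond /=.
  under eq_bigr => mm _ do rewrite /Fm !big_ord0.
  case: s hs => [|s] hs /=.
    rewrite expr0 sumr_const card_ffun !card_ord expn0 /= divn1 fact0 scale1r.
    by rewrite expr0.
  by rewrite exprS mul0r big1.
rewrite pkS exprDn [RHS]big_mkcond [RHS]split_ffun.
rewrite (bigID (fun j : 'I_4 => (j < s.+1)%N)) /=.
rewrite [X in _ = _ + X]big1 ?addr0; last first.
  move=> j hj; apply: big1 => g _.
  rewrite big_ord_recr /= extf_max.
  case: eqP => // h; exfalso; move: hj; rewrite -h; lia.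
rewrite (big_ord_widen 4 (fun j : nat => (pk y k ^+ (s - j) * (y k *: 'X^k) ^+ j) *+ 'C(s, j))) //.
apply: eq_bigr => j hj.
rewrite IH; last by lia.
rewrite mulr_suml -sumrMnl big_mkcond /=.
apply: eq_bigr => g _.
rewrite (bigext addn g j (fun i (v : nat) => v)).
have -> : ((\sum_(i < k) (g i : nat)) + j == s)%N = ((\sum_(i < k) (g i : nat)) == s - j)%N.
  by apply/eqP/eqP; lia.
case: eqP => hg //.
rewrite /Fm (bigext muln g j (fun i v => v`!)) (bigext (@GRing.mul int) g j (fun i v => y i ^+ v)).
rewrite (bigext addn g j (fun i v => (i * v)%N)).
have hd := fact_prod_dvd (fun i => (g i : nat)); rewrite /= hg in hd.
rewrite (multi_div (q := ((s - j)`! %/ \prod_(i < k) (g i)`!)%N) _ (esym (divnK hd))); last by lia.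
rewrite exprZn -exprM -scalerAl -scalerAr scalerA -exprD scalerMnl.
congr (_ *: 'X^_).
rewrite -mulr_natr PoszM natz.
set A := Posz (_ %/ _)%N; set B := \big[_/_]_(i < k) _.
set C := Posz _; set Y := _ ^+ _. change (A * B * Y * C = C * A * (B * Y)). ring.
Qed.

Definition yz (s : nat -> nat) : nat -> int := fun i => (s i)%:Z.

Lemma Nk_coef x k : Nk x k = (pk (yz x) k ^+ 3)`_k.
Proof.
rewrite multinom // coef_sum /Nk big_mkcondr /=.
apply: eq_bigr => mm _; rewrite /Fm coefZ coefXn.
by rewrite eq_sym; case: eqP; rewrite ?mulr1 ?mulr0.
Qed.

Lemma coef_trunc (p q p' q' : {poly int}) k :
  (forall i, (i <= k)%N -> p`_i = p'`_i) -> (forall i, (i <= k)%N -> q`_i = q'`_i) ->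
  forall i, (i <= k)%N -> (p * q)`_i = (p' * q')`_i.
Proof.
move=> hp hq i hi; rewrite !coefM; apply: eq_bigr => j _.
have := ltn_ord j => hj.
by rewrite hp ?hq //; lia.
Qed.

Lemma cube_coef y n k : (k < n)%N -> (pk y n ^+ 3)`_k = (pk y k.+1 ^+ 3)`_k.
Proof.
move=> hk.
have h1 : forall i, (i <= k)%N -> (pk y n)`_i = (pk y k.+1)`_i.
  by move=> i hi; rewrite /pk !coef_poly; case: ifP; case: ifP => //; lia.
rewrite !exprS expr0.
apply: (coef_trunc h1) => //.
apply: (coef_trunc h1) => //.
exact: (coef_trunc h1).
Qed.

Lemma cube_top y k : (pk y k.+1 ^+ 3)`_k =
  if k is k'.+1 then (pk y k ^+ 3)`_k + 3%:Z * y 0%N ^+ 2 * y k else y 0%N ^+ 3.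
Proof.
case: k => [|k].
  by rewrite pkS pk0 add0r expr0 alg_polyC -rmorphXn coefC.
set A := pk y k.+1; rewrite pkS -/A.
set c := y k.+1.
have -> : (A + c *: 'X^(k.+1)) ^+ 3 = A ^+ 3 + 'X^(k.+1) * (c%:P * (3%:R * A ^+ 2
   + 3%:R * A * (c%:P * 'X^(k.+1)) + (c%:P * 'X^(k.+1)) ^+ 2)).
  rewrite -mul_polyC; ring.
rewrite coefD coefXnM ltnn subnn !(coef0M, coefD, coefC, coefXn, coefMn, coef1, expr2) /=.
have -> : A`_0 = y 0%N by rewrite /A /pk coef_poly.
rewrite !mulr0 !addr0; congr (_ + _).
have -> : (1 + (1 + 1) : int) = 3%:Z by [].
by rewrite mulrC.
Qed.

Definition Dk a b x m k : int := Lk a x k - ck b m k.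
Definition rk a b x m k : int := ((Lk a x k + Mk a b x m k - ck b m k) %% 3)%Z.

Lemma carry a b x m n :
  \sum_(k < n) Dk a b x m k * 3%:Z ^+ k =
  3%:Z ^+ n * Mk a b x m n + \sum_(k < n) rk a b x m k * 3%:Z ^+ k.
Proof.
elim: n => [|n IH]; first by rewrite !big_ord0 /= mulr0 addr0.
rewrite !big_ord_recr /= IH.
have hv := divz_eq (Lk a x n + Mk a b x m n - ck b m n) 3.
rewrite /rk /Dk.
set q := ((_ %/ 3)%Z); set r := ((_ %% 3)%Z) in hv *.
set L := Lk a x n in hv *; set M := Mk a b x m n in hv *; set C := ck b m n in hv *.
have -> : L - C = q * 3 + r - M by rewrite -hv; ring.
rewrite exprSr.
have -> : (3 : int) = 3%:Z by [].
ring.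
Qed.

Lemma horner_trunc (Q : {poly int}) n :
  (3%:Z ^+ n %| Q.[3%:Z] - \sum_(k < n) Q`_k * 3%:Z ^+ k)%Z.
Proof.
rewrite -{1}(poly_take_drop n Q) hornerD hornerM hornerXn /take_poly horner_poly.
rewrite addrAC subrr add0r; exact: dvdz_mull (dvdzz _).
Qed.

Lemma trunc_pk s n : trunc3 s n = (pk (yz s) n).[3%:Z].
Proof. by rewrite /pk horner_poly. Qed.

Definition Qp a b x m n : {poly int} :=
  pk (yz x) n ^+ 3 + pk (yz a) n * pk (yz x) n - 'X^m * pk (yz b) n.

Lemma Qcoef a b x m n k : (k < n)%N ->
  (Qp a b x m n)`_k = (pk (yz x) k.+1 ^+ 3)`_k + conv3 a x k - ck b m k.
Proof.
move=> hk; rewrite /Qp coefB coefD cube_coef // coefXnM.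
congr (_ + _ - _).
  rewrite coefM; apply: eq_bigr => i _; rewrite /pk !coef_poly.
  have := ltn_ord i => hi.
  rewrite ifT; last by lia.
  by rewrite ifT //; lia.
rewrite /ck; case: ifP => // hkm.
by rewrite /pk coef_poly ifT //; lia.
Qed.

Lemma Esum a x n :
  \sum_(k < n) ((pk (yz x) k.+1 ^+ 3)`_k + conv3 a x k - Lk a x k) * 3%:Z ^+ k =
  if (1 < n)%N then 3%:Z ^+ n * (x 0%N)%:Z ^+ 2 * (x n.-1)%:Z else 0.
Proof.
elim: n => [|n IH]; first by rewrite big_ord0.
rewrite big_ord_recr /= IH cube_top.
case: n IH => [|n] IH.
  by rewrite /Lk /= /yz subrr mul0r addr0.
rewrite /Lk Nk_coef /yz.
case: n IH => [|n] IH /=;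
  move: (conv3 a x _) ((pk _ _ ^+ 3)`_ _) => C P; rewrite ?exprS; ring.
Qed.

Lemma dvd_addl d u v : (d %| u)%Z -> (d %| u + v)%Z = (d %| v)%Z.
Proof.
move=> h; apply/idP/idP => H; last exact: rpredD.
by have := rpredB H h; rewrite addrC addKr.
Qed.

Lemma step_n a b x m n :
  (3%:Z ^+ n %| trunc3 x n ^+ 3 + trunc3 a n * trunc3 x n - 3%:Z ^+ m * trunc3 b n)%Z =
  (3%:Z ^+ n %| \sum_(k < n) rk a b x m k * 3%:Z ^+ k)%Z.
Proof.
have hP : trunc3 x n ^+ 3 + trunc3 a n * trunc3 x n - 3%:Z ^+ m * trunc3 b n
          = (Qp a b x m n).[3%:Z].
  by rewrite /Qp !hornerD hornerN !hornerM !horner_exp hornerX !trunc_pk.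
have hQ : \sum_(k < n) (Qp a b x m n)`_k * 3%:Z ^+ k =
   \sum_(k < n) Dk a b x m k * 3%:Z ^+ k +
   \sum_(k < n) ((pk (yz x) k.+1 ^+ 3)`_k + conv3 a x k - Lk a x k) * 3%:Z ^+ k.
  rewrite -big_split; apply: eq_bigr => k _ /=.
  rewrite Qcoef // /Dk; ring.
have hT := horner_trunc (Qp a b x m n) n.
rewrite hP.
have -> : (Qp a b x m n).[3%:Z] =
   (((Qp a b x m n).[3%:Z] - \sum_(k < n) (Qp a b x m n)`_k * 3%:Z ^+ k) + 3%:Z ^+ n * Mk a b x m n +
    \sum_(k < n) ((pk (yz x) k.+1 ^+ 3)`_k + conv3 a x k - Lk a x k) * 3%:Z ^+ k)
   + \sum_(k < n) rk a b x m k * 3%:Z ^+ k.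
  rewrite hQ carry; ring.
rewrite dvd_addl //; apply: rpredD; first apply: rpredD => //.
  exact: dvdz_mulr.
by rewrite Esum; case: ifP => _; rewrite ?rpred0 // -mulrA dvdz_mulr.
Qed.

Theorem theorem3p2 (a b x : nat -> nat) (m : nat) :
  digits3 a -> digits3 b -> digits3 x ->
  a 0%N = 2%N -> b 0%N <> 0%N -> (0 < m)%N -> x 0%N <> 0%N ->
  (is_solution3 a b m x <->
   forall k : nat,
     (Lk a x k + Mk a b x m k = ck b m k %[mod 3])%Z).
Proof.
move=> _ _ _ _ _ _ _.
have hr : forall k, (0 <= rk a b x m k) && (rk a b x m k < 3%:Z).
  by move=> k; rewrite /rk modz_ge0 // ltz_pmod.
have eqv : forall k, (Lk a x k + Mk a b x m k = ck b m k %[mod 3])%Z <-> rk a b x m k = 0.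
  move=> k; rewrite /rk; split => [/eqP|h].
    by rewrite eqz_mod_dvd => /dvdz_mod0P.
  by apply/eqP; rewrite eqz_mod_dvd; apply/dvdz_mod0P.
rewrite /is_solution3; split.
  move=> H k; apply/eqv; elim/ltn_ind: k => k IH.
  have := H k.+1; rewrite step_n big_ord_recr /= big1 => [|j _]; last first.
    by rewrite IH ?mul0r //.
  rewrite add0r exprS dvdz_mul2r ?expf_neq0 // => /dvdz_mod0P.
  by rewrite modz_small // hr.
move=> H n; rewrite step_n big1 ?dvdz0 // => k _.
by rewrite (proj1 (eqv k) (H k)) mul0r.
Qed.
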